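(* Let $\delta_{\ell,0}>0$ and define $\delta_{\ell,i+1}=\delta_{\ell,i}/(1+\delta_{\ell,i})^2$ for $i\ge0$. Then there exists a constant $c_\ell>0$ such that for all $i\ge1$, $$\frac1{2i}-\frac{c_\ell+\log i}{8i^2}<\delta_{\ell,i}<\frac1{2i}.$$
   Context: In the paper, $\delta_{\ell,i}$ is the eigenvalue at iteration $i$ of deterministic EKI of the generalized eigenvalue problem $H\Gamma_iH^\top w_\ell=\delta_{\ell,i}\Sigma w_\ell$ along a fixed eigenvector $w_\ell$, and these satisfy the stated recurrence. *)

(* Defs.v *)
From Stdlib Require Import Reals.
Open Scope R_scope.

Definition eki_recurrence (delta : nat -> R) : Prop :=
  forall i : nat, delta (S i) = delta i / (1 + delta i) ^ 2.

(* Main.v *)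
Require Import Defs.
From Stdlib Require Import Reals Lra Lia.
Open Scope R_scope.

Lemma ln_step (x : R) : 0 < x -> 1 / (x + 1) <= ln (x + 1) - ln x.
Proof.
  intros Hx.
  pose proof (exp_ineq1_le (ln x - ln (x+1))) as H.
  unfold Rminus in H. rewrite exp_plus, exp_Ropp, !exp_ln in H by lra.
  assert (E : x * / (x + 1) = 1 - 1/(x+1)) by (field; lra).
  rewrite E in H. lra.
Qed.

Theorem proposition3p6 (delta : nat -> R) :
  0 < delta 0%nat ->
  eki_recurrence delta ->
  exists c : R, 0 < c /\
    forall i : nat, (1 <= i)%nat ->
      1 / (2 * INR i) - (c + ln (INR i)) / (8 * (INR i) ^ 2) < delta i /\
      delta i < 1 / (2 * INR i).
Proof.
  intros H0 Hrec.
  assert (Hpos : forall i, 0 < delta i).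
  { induction i as [|i IH]; [exact H0|]. rewrite Hrec.
    apply Rdiv_lt_0_compat; [lra|]. apply pow_lt; lra. }
  assert (Hu : forall i, 1 / delta (S i) = 1 / delta i + 2 + delta i).
  { intro i. rewrite Hrec. specialize (Hpos i). field. lra. }
  assert (Hup : forall m, delta (S m) < 1 / (2 * INR (S m))).
  { induction m as [|m IH].
    - rewrite Hrec. simpl INR. specialize (Hpos 0%nat).
      apply Rmult_lt_reg_r with ((1 + delta 0%nat)^2); [apply pow_lt; lra|].
      unfold Rdiv. rewrite Rmult_assoc, Rinv_l by (apply pow_nonzero; lra).
      simpl. nra.
    - rewrite Hrec. rewrite S_INR.
      pose proof (pos_INR m) as Hm. assert (Hn : 0 < INR m + 1) by lra. rewrite S_INR in IH |- *.
      set (n := INR m + 1) in *. set (x := delta (S m)) in *.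
      assert (Hx : 0 < x) by apply Hpos.
      assert (Hxn : 2 * n * x < 1).
      { apply Rmult_lt_compat_l with (r := 2 * n) in IH; [|lra].
        replace (2 * n * (1 / (2 * n))) with 1 in IH by (field; lra). lra. }
      apply Rmult_lt_reg_r with ((1 + x)^2); [apply pow_lt; lra|].
      unfold Rdiv. rewrite Rmult_assoc, Rinv_l by (apply pow_nonzero; lra).
      apply Rmult_lt_reg_l with (2 * (n + 1)); [lra|].
      replace (2 * (n + 1) * (1 * / (2 * (n + 1)) * (1 + x) ^ 2)) with ((1+x)^2)
        by (field; lra).
      simpl. nra. }
  set (K := 1 / delta 0%nat + delta 0%nat + 1/2).
  assert (HK : 0 < K).
  { unfold K. specialize (Hpos 0%nat). assert (0 < 1 / delta 0%nat) by
      (apply Rdiv_lt_0_compat; lra). lra. }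
  assert (Hlow : forall m, 1 / delta (S m) <=
     2 * INR (S m) + K + ln (INR (S m)) / 2 - 1 / (2 * INR (S m))).
  { induction m as [|m IH].
    - rewrite Hu. simpl INR. rewrite ln_1. unfold K. lra.
    - rewrite Hu. specialize (Hup m).
      pose proof (pos_INR m) as Hm.
      rewrite (S_INR (S m)). rewrite S_INR in IH, Hup |- *.
      pose proof (ln_step (INR m + 1) ltac:(lra)) as Hl.
      assert (E : 1 / (2 * (INR m + 1 + 1)) = (1 / (INR m + 1 + 1)) / 2) by (field; lra).
      rewrite E. lra. }
  exists (2 * K). split; [lra|].
  intros i Hi. destruct i as [|m]; [lia|].
  split; [|apply Hup].
  specialize (Hlow m). pose proof (Hpos (S m)) as Hd.
  pose proof (pos_INR m) as Hm. assert (Hn0 : 1 <= INR m + 1) by lra. rewrite S_INR in Hlow |- *.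
  set (n := INR m + 1) in *. set (x := delta (S m)) in *.
  assert (Hln : 0 <= ln n).
  { rewrite <- ln_1. destruct (Req_dec n 1) as [->|Hne]; [lra|]. left. apply ln_increasing; unfold n in *; lra. }
  set (B := K + ln n / 2).
  assert (HB : 0 < B) by (unfold B; lra).
  assert (Hux : 1 / x <= 2 * n + B).
  { unfold B. assert (0 < 1 / (2 * n)) by (apply Rdiv_lt_0_compat; lra). lra. }
  assert (Hx : 1 / (2 * n + B) <= x).
  { replace x with (1 / (1 / x)) by (field; lra).
    apply Rmult_le_compat_l; [lra|]. apply Rinv_le_contravar; [|exact Hux].
    apply Rdiv_lt_0_compat; lra. }
  assert (E : (2 * K + ln n) / (8 * n ^ 2) = B / (4 * n ^ 2)) by (unfold B; field; lra).
  rewrite E.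
  apply Rlt_le_trans with (1 / (2 * n + B)); [|exact Hx].
  assert (E2 : 1 / (2 * n) - B / (4 * n ^ 2) - 1 / (2 * n + B)
               = - (B * B) / (4 * n ^ 2 * (2 * n + B))) by (field; lra).
  assert (0 < (B * B) / (4 * n ^ 2 * (2 * n + B))).
  { apply Rdiv_lt_0_compat; [nra|]. apply Rmult_lt_0_compat; [|lra].
    assert (0 < n ^ 2) by (apply pow_lt; lra). lra. }
  assert (E3 : - (B * B) / (4 * n ^ 2 * (2 * n + B)) = - ((B * B) / (4 * n ^ 2 * (2 * n + B))))
    by (unfold Rdiv; ring).
  lra.
Qed.
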